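(* Let $w$ be a word over $\Sigma$ and let $(h_1,p_1)<(h_2,p_2)<\cdots<(h_s,p_s)$ be Abelian periods of $w$ such that $(|w|-h_i)\bmod p_i=t$ for all $1\le i\le s$, for a common integer $t>0$. Then for every letter $a\in\Sigma$: if $(h_1,p_1)$ is an Abelian period of $wa$, then $(h_2,p_2),\dots,(h_s,p_s)$ are also Abelian periods of $wa$.
   Context: Words are finite sequences over a finite alphabet $\Sigma=\{a_1,\dots,a_\sigma\}$; $wa$ denotes $w$ followed by the letter $a$. The Parikh vector of a word $u$ is $\mathcal{P}_u=(|u|_{a_1},\dots,|u|_{a_\sigma})$, where $|u|_a$ is the number of occurrences of $a$ in $u$; its norm is $|\mathcal{P}_u|=|u|$. $\mathcal{P}\subset\mathcal{Q}$ means $\mathcal{P}[j]\le\mathcal{Q}[j]$ for all $j$ and $|\mathcal{P}|<|\mathcal{Q}|$. A word $w$ has Abelian period $(h,p)$ (integers $h\ge0$, $p\ge1$) if $w=u_0u_1\cdots u_{k-1}u_k$ for some $k\ge 2$ (with $u_0,u_k$ possibly empty) with $|u_0|=h$, $|u_1|=p$ and $\mathcal{P}_{u_0}\subset\mathcal{P}_{u_1}=\cdots=\mathcal{P}_{u_{k-1}}\supset\mathcal{P}_{u_k}$; the tail $u_k$ then has length $(|w|-h)\bmod p$. Pairs are ordered by $(h,p)<(h',p')$ iff $p<p'$, or $p=p'$ and $h<h'$. *)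

(* Defs.v *)
From mathcomp Require Import all_boot.
Set Implicit Arguments. Unset Strict Implicit. Unset Printing Implicit Defensive.

Definition parikh (T : finType) (u : seq T) : T -> nat := fun a => count_mem a u.

Definition parikh_eq (T : finType) (u v : seq T) : Prop :=
  forall a : T, parikh u a = parikh v a.

Definition parikh_sub (T : finType) (u v : seq T) : Prop :=
  (forall a : T, parikh u a <= parikh v a) /\ size u < size v.

(* w has Abelian period (h,p): w = u0 u1 ... u_{k-1} u_k, k >= 2,
   |u0| = h, |u1| = p, P_{u0} \subset P_{u1} = ... = P_{u_{k-1}} \supset P_{u_k}.
   Here u1 :: mid = [u1; ...; u_{k-1}] (so k - 1 >= 1 blocks). *)
Definition abelian_period (T : finType) (w : seq T) (h p : nat) : Prop :=
  1 <= p /\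
  exists (u0 u1 : seq T) (mid : seq (seq T)) (uk : seq T),
    [/\ w = u0 ++ u1 ++ flatten mid ++ uk,
        size u0 = h /\ size u1 = p,
        parikh_sub u0 u1,
        (forall u, u \in mid -> parikh_eq u u1)
      & parikh_sub uk u1].

Definition ap_lt (x y : nat * nat) : bool :=
  (x.2 < y.2) || ((x.2 == y.2) && (x.1 < y.1)).

(* Main.v *)
Require Import Defs.
From mathcomp Require Import all_boot.
From mathcomp Require Import zify.
Set Implicit Arguments. Unset Strict Implicit.

Section Aux.
Variable T : finType.

Lemma suffix_drop (X Y : seq T) : drop (size (X ++ Y) - size Y) (X ++ Y) = Y.
Proof. by rewrite size_cat addnK drop_size_cat. Qed.

Lemma size_flat p (mid : seq (seq T)) :
  (forall u, u \in mid -> size u = p) -> size (flatten mid) = size mid * p.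
Proof.
elim: mid => [|u m IH] H //=.
rewrite size_cat H ?mem_head // IH ?mulSn // => v hv; apply: H.
by rewrite in_cons hv orbT.
Qed.

Lemma peq_size (u v : seq T) : parikh_eq u v -> size u = size v.
Proof.
move=> H; apply: perm_size; apply/allP => x _ /=; apply/eqP; exact: H x.
Qed.

Lemma le_peq (u v : seq T) :
  (forall b, parikh u b <= parikh v b) -> size u = size v -> parikh_eq u v.
Proof.
move=> H Hs.
have /count_subseqP [s ss pe] : forall b, count_mem b u <= count_mem b v := H.
have Hsz : size s = size v by rewrite -(perm_size pe).
have [_ E] := size_subseq_leqif ss.
move: E; rewrite Hsz eqxx => /esym/eqP Esv; subst s.
by move=> b; rewrite /parikh; apply: (permP pe).
Qed.

Lemma last_block (u1 uk : seq T) mid :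
  (forall u, u \in mid -> parikh_eq u u1) ->
  exists pre B, u1 ++ flatten mid ++ uk = pre ++ B ++ uk /\ parikh_eq B u1.
Proof.
case/lastP: mid => [|m b] H.
  by exists [::], u1; split => //= c.
exists (u1 ++ flatten m), b; rewrite flatten_rcons -!catA; split => //.
by apply: H; rewrite mem_rcons mem_head.
Qed.

Lemma dec_size (w u0 u1 uk : seq T) mid h p :
  w = u0 ++ u1 ++ flatten mid ++ uk -> size u0 = h -> size u1 = p ->
  (forall u, u \in mid -> parikh_eq u u1) ->
  size w - h = (size mid).+1 * p + size uk.
Proof.
move=> E s0 s1 H.
have Hsz : size (flatten mid) = size mid * p.
  by apply: size_flat => u hu; rewrite -s1; apply: peq_size; apply: H.
by rewrite E !size_cat s0 Hsz addKn mulSn s1 !addnA.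
Qed.

Lemma dec_mod (w u0 u1 uk : seq T) mid h p :
  w = u0 ++ u1 ++ flatten mid ++ uk -> size u0 = h -> size u1 = p ->
  (forall u, u \in mid -> parikh_eq u u1) -> size uk < p ->
  size uk = (size w - h) %% p.
Proof.
move=> E s0 s1 H lt.
by rewrite (dec_size E s0 s1 H) modnMDl modn_small.
Qed.

Lemma count_drop_mono (P : pred T) n m (l : seq T) :
  n <= m -> count P (drop m l) <= count P (drop n l).
Proof.
move=> nm; rewrite -(subnK nm) -drop_drop.
by rewrite -{2}(cat_take_drop (m - n) (drop n l)) count_cat leq_addl.
Qed.

Lemma ext_w (w : seq T) h p t :
  abelian_period w h p -> (size w - h) %% p = t ->
  exists u0 u1 mid,
   [/\ w = u0 ++ u1 ++ flatten mid ++ drop (size w - t) w,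
       size u0 = h /\ size u1 = p, parikh_sub u0 u1,
       (forall u, u \in mid -> parikh_eq u u1)
     & parikh_sub (drop (size w - t) w) u1 /\ forall b, count_mem b u1 + count_mem b (drop (size w - t) w)
                 = count_mem b (drop (size w - (p + t)) w)].
Proof.
move=> [hp [u0 [u1 [mid [uk [E [s0 s1] sub0 Hmid subk]]]]]] Ht.
have Huk : size uk = t.
  rewrite -Ht; apply: (dec_mod E s0 s1 Hmid); rewrite -s1; exact: subk.2.
have Duk : drop (size w - t) w = uk.
  by rewrite -Huk E !catA suffix_drop.
have [pre [B [EB pB]]] := last_block uk Hmid.
have sB : size B = p by rewrite -s1; apply: peq_size.
exists u0, u1, mid; rewrite Duk; split => //; split => // b.
have -> : drop (size w - (p + t)) w = B ++ uk.
  by rewrite -sB -Huk -size_cat E EB catA suffix_drop.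
by rewrite count_cat; have := pB b; rewrite /parikh => ->.
Qed.

Lemma extend (w u0 u1 uk : seq T) mid h p (a : T) :
  w = u0 ++ u1 ++ flatten mid ++ uk -> size u0 = h -> size u1 = p ->
  parikh_sub u0 u1 -> (forall u, u \in mid -> parikh_eq u u1) ->
  parikh_sub uk u1 -> count_mem a uk < count_mem a u1 ->
  abelian_period (rcons w a) h p.
Proof.
move=> E s0 s1 sub0 Hmid subk K.
have cnt : forall b, parikh (rcons uk a) b <= parikh u1 b.
  move=> b; rewrite /parikh -cats1 count_cat /=.
  case: (eqVneq a b) => [<-|nab]; first by rewrite addn0 addn1.
  by rewrite addn0 addn0; apply: subk.1.
have hp : 0 < p by rewrite -s1; apply: leq_ltn_trans (leq0n _) sub0.2.
split => //.
have skp : size uk < p by rewrite -s1; exact: subk.2.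
case: (ltngtP (size uk).+1 p) => [lt|gt|eq].
- exists u0, u1, mid, (rcons uk a); split => //.
    by rewrite E !rcons_cat.
  by split => //; rewrite size_rcons s1.
- by move: gt; rewrite ltnS leqNgt skp.
- exists u0, u1, (rcons mid (rcons uk a)), [::]; split => //.
  + by rewrite E flatten_rcons cats0 !rcons_cat catA -!catA.
  + move=> u; rewrite mem_rcons in_cons => /orP [/eqP ->|hu]; last exact: Hmid.
    by apply: le_peq => //; rewrite size_rcons eq s1.
  + by split => //=; rewrite s1.
Qed.

End Aux.

Theorem mainTheorem7 (T : finType) (w : seq T) (a : T) (t : nat)
    (h1 p1 : nat) (rest : seq (nat * nat)) :
  0 < t ->
  sorted ap_lt ((h1, p1) :: rest) ->
  (forall x, x \in (h1, p1) :: rest -> abelian_period w x.1 x.2) ->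
  (forall x, x \in (h1, p1) :: rest -> (size w - x.1) %% x.2 = t) ->
  abelian_period (rcons w a) h1 p1 ->
  forall x, x \in rest -> abelian_period (rcons w a) x.1 x.2.
Proof.
move=> t0 Hsort Hper Hmod Hwa x Hx.
set s := drop (size w - t) w.
have Hm1 := Hmod _ (mem_head _ _); rewrite /= in Hm1.
have Hp1 := Hper _ (mem_head _ _); rewrite /= in Hp1.
have [u0 [u1 [mid [E1 [s0 s1] sub0 mid1 [subs1 C1]]]]] := ext_w Hp1 Hm1.
have Hxin : x \in (h1, p1) :: rest by rewrite in_cons Hx orbT.
have [v0 [v1 [vmid [E2 [r0 r1] sub0' mid2 [subs2 C2]]]]] :=
  ext_w (Hper _ Hxin) (Hmod _ Hxin).
have ht : t <= size w.
  by rewrite -Hm1; apply: leq_trans (leq_mod _ _) (leq_subr _ _).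
have ss : size s = t by rewrite size_drop subKn.
have tp1 : t < p1 by rewrite -ss -s1; exact: subs1.2.
have hw : h1 + p1 <= size w.
  by rewrite E1 !size_cat s0 s1 addnA leq_addr.
have p1x : p1 <= x.2.
  have : path (fun y z : nat * nat => y.2 <= z.2) (h1, p1) rest.
    apply: sub_path Hsort => y z; rewrite /ap_lt => /orP [/ltnW //|].
    by case/andP => /eqP ->.
  move/(order_path_min (fun y z k => @leq_trans y.2 z.2 k.2))/allP.
  by move/(_ _ Hx).
have Ds : drop (size (rcons w a) - t.+1) (rcons w a) = rcons s a.
  by rewrite size_rcons subSS drop_rcons // leq_subr.
have cs : count_mem a (rcons s a) = (count_mem a s).+1.
  by rewrite -cats1 count_cat /= eqxx addn1.
have K : count_mem a s < count_mem a u1.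
  case: Hwa => hp [y0 [y1 [ymid [yk [E3 [sy0 sy1] suby0 ymidH subyk]]]]].
  have y1u1 : y1 = u1.
    have e1 : take p1 (drop h1 (rcons w a)) = y1.
      by rewrite E3 drop_size_cat // take_size_cat.
    have e2 : take p1 (drop h1 w) = u1.
      by rewrite E1 drop_size_cat // take_size_cat.
    rewrite -e1 -e2 drop_rcons; last by apply: leq_trans (leq_addr _ _) hw.
    by rewrite -cats1 takel_cat // size_drop leq_subRL // (leq_trans _ hw) ?leq_addr.
  subst y1.
  have syk : size yk = (size (rcons w a) - h1) %% p1.
    apply: (dec_mod E3 sy0 sy1 ymidH); rewrite -sy1; exact: subyk.2.
  have syk' : size yk = t.+1 %% p1.
    rewrite syk size_rcons subSn; last by apply: leq_trans (leq_addr _ _) hw.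
    by rewrite -addn1 -modnDml Hm1 addn1.
  case: (ltngtP t.+1 p1) => [lt|gt|eq].
  - rewrite modn_small // in syk'.
    have : yk = rcons s a by rewrite -Ds -syk' E3 !catA suffix_drop.
    move=> eyk; have := subyk.1 a; rewrite /parikh eyk cs => //.
  - by move: gt; rewrite ltnS leqNgt tp1.
  - rewrite eq modnn in syk'; move/size0nil: syk' => eyk; subst yk.
    have [pre [B [EB pB]]] := last_block [::] ymidH.
    have sB : size B = p1 by rewrite -sy1; apply: peq_size.
    have eB : B = rcons s a.
      by rewrite -Ds eq -sB E3 EB !cats0 catA suffix_drop.
    by have := pB a; rewrite /parikh eB cs => ->.
have Kx : count_mem a u1 <= count_mem a v1.
  have := C1 a; have := C2 a; rewrite -/s => c2 c1.
  rewrite -(leq_add2r (count_mem a s)) c1 c2.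
  by apply: count_drop_mono; apply: leq_sub2l; rewrite leq_add2r.
exact: (extend E2 r0 r1 sub0' mid2 subs2 (leq_trans K Kx)).
Qed.
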